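(* Let $n\ge 1$, let $\vec u=(u_1,\dots,u_n)\in\{-1,1\}^n$, and let $H_c(\vec u)=\sigma_1^{u_1}\cdots\sigma_n^{u_n}+\sigma_1^{-u_1}\cdots\sigma_n^{-u_n}$ acting on $n$ qubits. Let $v_i=(1+u_i)/2\in\{0,1\}$ and $\bar v_i=(1-u_i)/2=1-v_i$, and define $$|x^{\pm}\rangle=\frac{|v_1\cdots v_n\rangle\pm|\bar v_1\cdots\bar v_n\rangle}{\sqrt2}.$$ Let $G$ be any $n$-qubit unitary with $G|x^+\rangle=|0\,1\cdots1\rangle$ and $G|x^-\rangle=|1\,1\cdots1\rangle$ (first qubit in state $0$, resp. $1$, all other qubits in state $1$). For $\theta\in\mathbb{R}$ let $P(\theta)$ be the $n$-qubit multi-controlled phase gate, i.e. the diagonal unitary with $P(\theta)|1\cdots1\rangle=e^{i\theta}|1\cdots1\rangle$ and $P(\theta)|b\rangle=|b\rangle$ for every other computational basis state $|b\rangle$. Let $X_1$ denote the Pauli $X$ gate on the first qubit. Then for every $\beta\in\mathbb{R}$, $$e^{-i\beta H_c(\vec u)}=G^\dagger P(\beta)X_1P(-\beta)X_1G .$$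
   Context: Qubits are labelled $1,\dots,n$; $|b_1\cdots b_n\rangle$ denotes the computational basis state with qubit $i$ in state $b_i$. $\sigma_i^{u}$ denotes the single-qubit matrix $\sigma^{u}$ on qubit $i$ (tensored with identity elsewhere), where $\sigma^{+1}=\begin{pmatrix}0&0\\1&0\end{pmatrix}$ and $\sigma^{-1}=\begin{pmatrix}0&1\\0&0\end{pmatrix}$ in the basis $|0\rangle,|1\rangle$. In the paper, $\vec u$ arises as a solution of $C\vec u=\vec 0$ for a constraint matrix $C$, restricted to the qubits on which it is nonzero. *)

(* Defs.v *)
From mathcomp Require Import all_boot all_algebra all_classical all_reals all_analysis complex.
Import GRing.Theory Num.Theory.
Import numFieldNormedType.Exports.
Set Implicit Arguments. Unset Strict Implicit. Unset Printing Implicit Defensive.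
Local Open Scope ring_scope.
Local Open Scope classical_set_scope.

Section QDefs.
Variable R : realType.
Local Notation C := R[i].

(* Computational basis of n qubits: index r : 'I_(2^n) encodes |b_1 ... b_n>
   with qubit 1 the most significant bit.  Qubits are 0-indexed here:
   qubit k+1 of the paper is k : 'I_n. *)
Definition qbit (n : nat) (r : 'I_(2 ^ n)) (k : 'I_n) : bool :=
  odd (r %/ 2 ^ (n.-1 - k)).

Definition ket (n : nat) (b : 'I_n -> bool) : 'cV[C]_(2 ^ n) :=
  \col_r (if [forall k, qbit r k == b k] then 1 else 0).

(* sigma^{+1} = [[0,0],[1,0]] (maps |0> to |1>), sigma^{-1} = [[0,1],[0,0]];
   entry (row a, column c) with a, c bits. *)
Definition sigma1 (u : int) (a c : bool) : C :=
  if u == 1 then (if a && ~~ c then 1 else 0)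
  else (if ~~ a && c then 1 else 0).

Definition sigma_on (n : nat) (k : 'I_n) (u : int) : 'M[C]_(2 ^ n) :=
  \matrix_(r, s) (if [forall j, (j != k) ==> (qbit r j == qbit s j)]
                  then sigma1 u (qbit r k) (qbit s k) else 0).

Definition mxprod (m n : nat) (M : 'I_n -> 'M[C]_m) : 'M[C]_m :=
  \big[mulmx/1%:M]_(i < n) M i.

Definition Hc (n : nat) (u : 'I_n -> int) : 'M[C]_(2 ^ n) :=
  mxprod (fun k => sigma_on k (u k)) + mxprod (fun k => sigma_on k (- u k)).

Definition expi (t : R) : C := (cos t +i* sin t)%C.

Definition Pgate (n : nat) (t : R) : 'M[C]_(2 ^ n) :=
  \matrix_(r, s) (if r == s then
                   (if [forall k, qbit r k] then expi t else 1) else 0).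

Definition Xon (n : nat) (k : 'I_n) : 'M[C]_(2 ^ n) :=
  \matrix_(r, s) (if [forall j, if j == k then qbit r j != qbit s j
                                else qbit r j == qbit s j] then 1 else 0).

Definition dagger (m n : nat) (A : 'M[C]_(m, n)) : 'M[C]_(n, m) :=
  (map_mx (@conjc R) A)^T.

Definition unitary (m : nat) (U : 'M[C]_m) : Prop :=
  dagger U *m U = 1%:M /\ U *m dagger U = 1%:M.

Definition mxpow (m : nat) (A : 'M[C]_m) (k : nat) : 'M[C]_m :=
  iter k (mulmx A) 1%:M.

Definition exp_partial (m : nat) (A : 'M[C]_m) (N : nat) : 'M[C]_m :=
  \sum_(k < N) ((k`!)%:R)^-1 *: mxpow A k.

Definition is_mxexp (m : nat) (A E : 'M[C]_m) : Prop :=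
  forall i j,
    (fun N => complex.Re (exp_partial A N i j)) @ \oo --> complex.Re (E i j) /\
    (fun N => complex.Im (exp_partial A N i j)) @ \oo --> complex.Im (E i j).

Definition miR (b : R) : C := (0 +i* (- b))%C.

Definition invsqrt2 : C := ((Num.sqrt (2 : R))^-1 +i* 0)%C.

End QDefs.

(* Main.v *)
Require Import Defs.
From mathcomp Require Import all_boot all_algebra all_classical all_reals all_analysis complex.
From mathcomp Require Import zify ring lra.
Import GRing.Theory Num.Theory.
Local Open Scope ring_scope.


Lemma bits_inj_aux (n : nat) (r s : nat) : (r < 2 ^ n)%N -> (s < 2 ^ n)%N ->
  (forall i, (i < n)%N -> odd (r %/ 2 ^ i) = odd (s %/ 2 ^ i)) -> r = s.
Proof.
elim: n r s => [|n IH] r s.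
  by rewrite expn0 !ltnS !leqn0 => /eqP -> /eqP ->.
move=> hr hs hb.
have h0 := hb 0%N (ltn0Sn _); rewrite expn0 !divn1 in h0.
have : (r./2 = s./2).
  apply: IH.
  - by rewrite expnS in hr; rewrite -divn2; lia.
  - by rewrite expnS in hs; rewrite -divn2; lia.
  move=> i hi; have := hb i.+1 hi; by rewrite !expnS !divnMA !divn2.
move=> h2; rewrite -[r]odd_double_half -[s]odd_double_half h0 h2 //.
Qed.

Lemma qbit_inj (n : nat) (r s : 'I_(2 ^ n)) :
  (forall k, qbit r k = qbit s k) -> r = s.
Proof.
move=> h; apply: val_inj; apply: (@bits_inj_aux n) => //; first exact: ltn_ord r; first exact: ltn_ord s.
move=> i hi.
have hk : (n.-1 - i < n)%N by lia.
have := h (Ordinal hk); rewrite /qbit /=.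
by have -> : (n.-1 - (n.-1 - i) = i)%N by lia.
Qed.

Lemma qbit_surj (n : nat) (b : 'I_n -> bool) :
  exists r : 'I_(2 ^ n), forall k, qbit r k = b k.
Proof.
pose f := fun r : 'I_(2 ^ n) => [ffun k => qbit r k].
have finj : injective f.
  move=> r s /ffunP h; apply: qbit_inj => k; have := h k; by rewrite !ffunE.
have hc : (#|{ffun 'I_n -> bool}| <= #|'I_(2 ^ n)|)%N.
  by rewrite card_ffun card_bool !card_ord.
case: (inj_card_bij finj hc) => g fg gf.
exists (g [ffun k => b k]) => k.
have := gf [ffun k => b k]; rewrite /f => /ffunP /(_ k); by rewrite !ffunE.
Qed.
Arguments qbit_surj {n} b.
Arguments qbit_inj {n r s}.


Lemma mx_recr (T : pzRingType) (N k : nat) (F : 'I_k.+1 -> 'M[T]_N) :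
  \big[mulmx/1%:M]_(i < k.+1) F i =
  (\big[mulmx/1%:M]_(i < k) F (widen_ord (leqnSn k) i)) *m F ord_max.
Proof.
elim: k F => [|k IH] F.
  rewrite (@big_ord_recl _ _ _ 0 F) !big_ord0 mulmx1 mul1mx; congr F; exact: val_inj.
rewrite (@big_ord_recl _ _ _ k.+1 F) (IH (fun i => F (lift ord0 i))).
rewrite (@big_ord_recl _ _ _ k (fun i => F (widen_ord (leqnSn k.+1) i))) mulmxA.
congr (_ *m _ *m _).
- congr F; exact: val_inj.
- apply: eq_bigr => i _; congr F; exact: val_inj.
- congr F; exact: val_inj.
Qed.

Section Local.
Variable R : realType.
Variable n : nat.
Variable f : 'I_n -> bool -> bool -> R[i].

Definition lmx (k : 'I_n) : 'M[R[i]]_(2 ^ n) :=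
  \matrix_(r, s) (if [forall j, (j != k) ==> (qbit r j == qbit s j)]
                  then f k (qbit r k) (qbit s k) else 0).

Lemma lprod_aux m (hm : (m <= n)%N) (r s : 'I_(2 ^ n)) :
  (\big[mulmx/1%:M]_(i < m) lmx (widen_ord hm i)) r s =
  (if [forall j : 'I_n, (m <= j)%N ==> (qbit r j == qbit s j)] then 1 else 0) *
  \prod_(i < m) f (widen_ord hm i) (qbit r (widen_ord hm i)) (qbit s (widen_ord hm i)).
Proof.
elim: m hm r s => [|m IH] hm r s.
  rewrite big_ord0 big_ord0 mulr1 mxE.
  case: (boolP [forall _, _]) => H.
    have -> : r = s by apply: qbit_inj => k; have := forallP H k; move/eqP.
    by rewrite eqxx.
  have /negbTE -> : r != s.
    apply/eqP => e; subst s; apply: (negP H); apply/forallP => j; by rewrite eqxx implybT.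
  by [].
rewrite mx_recr /=.
have e1 : forall i : 'I_m, widen_ord hm (widen_ord (leqnSn m) i) = widen_ord (ltnW hm) i.
  by move=> i; apply: val_inj.
under eq_bigr => i _ do rewrite e1.
set km := widen_ord hm ord_max.
rewrite mxE.
case: (boolP [forall j : 'I_n, (m.+1 <= j)%N ==> (qbit r j == qbit s j)]) => HC.
  pose tb := fun j : 'I_n => if (j < m)%N then qbit s j else qbit r j.
  have [t0 Ht0] := qbit_surj tb.
  rewrite (bigD1 t0) //= big1 ?addr0; last first.
    move=> t Ht; rewrite IH mxE.
    case: ifP => H1; last by rewrite !mul0r.
    case: ifP => H2; last by rewrite mulr0.
    exfalso; move/negP: Ht; apply; apply/eqP; apply: qbit_inj => j.
    rewrite Ht0 /tb; case: ifP => hj.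
      have hj' : j != km by apply/eqP => ej; move: hj; rewrite ej /km /= ltnn.
      by have := forallP H2 j; rewrite hj' implyTb => /eqP.
    have := forallP H1 j; rewrite leqNgt hj implyTb => /eqP <-; by [].
  rewrite IH mxE.
  have -> : [forall j : 'I_n, (m <= j)%N ==> (qbit r j == qbit t0 j)].
    apply/forallP => j; apply/implyP => hj; rewrite Ht0 /tb ltnNge hj //.
  have -> : [forall j : 'I_n, (j != km) ==> (qbit t0 j == qbit s j)].
    apply/forallP => j; apply/implyP => hj; rewrite Ht0 /tb; case: ifP => // hjm.
    have hmj : (m < j)%N.
      move: hj hjm; rewrite -(inj_eq val_inj) /= => hj /negbT; rewrite -leqNgt => hjm.
      by rewrite ltn_neqAle eq_sym hj hjm.
    by have := forallP HC j; rewrite hmj implyTb.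
  rewrite !mul1r big_ord_recr /= -/km.
  congr (_ * _); last by rewrite Ht0 /tb /= ltnn.
  apply: eq_bigr => i _; rewrite e1 Ht0 /tb /= ltn_ord //.
rewrite big1; last first.
  move=> t _; rewrite IH mxE.
  case: ifP => H1; last by rewrite !mul0r.
  case: ifP => H2; last by rewrite mulr0.
  exfalso; move/forallPn: HC => [j]; rewrite negb_imply => /andP [hj hne].
  have := forallP H1 j; rewrite (ltnW hj) implyTb => /eqP e.
  have hj' : j != km by apply/eqP => ej; move: hj; rewrite ej /km /= ltnn.
  have := forallP H2 j; rewrite hj' implyTb.
  by move/eqP => e'; move: hne; rewrite e e' eqxx.
by rewrite mul0r.
Qed.

Lemma lprod (r s : 'I_(2 ^ n)) :
  (\big[mulmx/1%:M]_(i < n) lmx i) r s = \prod_(i < n) f i (qbit r i) (qbit s i).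
Proof.
have := @lprod_aux n (leqnn n) r s.
have e : forall i : 'I_n, widen_ord (leqnn n) i = i by move=> i; apply: val_inj.
rewrite (eq_bigr (fun i => lmx i)); last by move=> i _; rewrite e.
move=> ->.
have -> : [forall j : 'I_n, (n <= j)%N ==> (qbit r j == qbit s j)].
  apply/forallP => j; by rewrite leqNgt ltn_ord.
rewrite mul1r; apply: eq_bigr => i _; by rewrite e.
Qed.
End Local.


Section Kets.
Variable R : realType.
Variable n : nat.
Local Notation C := R[i].

Lemma ketE (b : 'I_n -> bool) r j :
  ket R b r j = if [forall k, qbit r k == b k] then 1 else 0.
Proof. by rewrite mxE. Qed.

Lemma prod_if (P : 'I_n -> bool) :
  \prod_(k < n) (if P k then 1 else 0 : C) = if [forall k, P k] then 1 else 0.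
Proof.
case: (boolP [forall k, P k]) => H.
  by apply: big1 => k _; rewrite (forallP H k).
move/forallPn: H => [k /negbTE hk].
by rewrite (bigD1 k) //= hk mul0r.
Qed.

Lemma ket_pair (b : 'I_n -> bool) (r s : 'I_(2 ^ n)) :
  ket R b r 0 * ket R b s 0 = (r == s)%:R * ket R b r 0.
Proof.
rewrite !ketE.
case: (boolP (r == s)) => [/eqP -> | hrs]; first by case: ifP; rewrite ?mulr1 ?mul1r ?mulr0.
case: ifP => h1; case: ifP => h2; rewrite ?mulr0 ?mul0r ?mulr1 //.
exfalso; move/negP: hrs; apply; apply/eqP; apply: qbit_inj => k.
by rewrite (eqP (forallP h1 k)) (eqP (forallP h2 k)).
Qed.

Lemma ket_dot (b b' : 'I_n -> bool) :
  (ket R b)^T *m ket R b' = (if [forall k, b k == b' k] then 1 else 0)%:M.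
Proof.
apply/matrixP => i j; rewrite !ord1 !mxE /=.
case: (boolP [forall k, b k == b' k]) => H.
  have [r0 Hr0] := qbit_surj b.
  rewrite (bigD1 r0) //= big1 ?addr0.
    rewrite !mxE.
    have -> : [forall k, qbit r0 k == b k] by apply/forallP => k; rewrite Hr0.
    have -> : [forall k, qbit r0 k == b' k].
      by apply/forallP => k; rewrite Hr0 (eqP (forallP H k)).
    by rewrite mulr1.
  move=> r hr; rewrite !mxE; case: ifP => h1; last by rewrite mul0r.
  exfalso; move/negP: hr; apply; apply/eqP; apply: qbit_inj => k.
  by rewrite Hr0 (eqP (forallP h1 k)).
apply: big1 => r _; rewrite !mxE.
case: ifP => h1; last by rewrite mul0r.
case: ifP => h2; last by rewrite mulr0.
exfalso; move/negP: H; apply; apply/forallP => k.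
by rewrite -(eqP (forallP h1 k)) -(eqP (forallP h2 k)).
Qed.

Lemma ket_conj (b : 'I_n -> bool) r j : conjc (ket R b r j) = ket R b r j.
Proof. by rewrite ketE; case: ifP => _; rewrite ?conjc1 ?conjc0. Qed.

Lemma sigma1E (x : int) (hx : x = 1 \/ x = -1) a c :
  sigma1 R x a c = if (a == (x == 1)) && (c == (x != 1)) then 1 else 0.
Proof. by case: hx => ->; case: a; case: c. Qed.

Lemma sigma1NE (x : int) (hx : x = 1 \/ x = -1) a c :
  sigma1 R (- x) a c = if (a == (x != 1)) && (c == (x == 1)) then 1 else 0.
Proof. by case: hx => ->; case: a; case: c. Qed.

Lemma forall_andb (P Q : 'I_n -> bool) :
  [forall k, P k && Q k] = [forall k, P k] && [forall k, Q k].
Proof.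
apply/forallP/andP => [H | [H1 H2] k].
  by split; apply/forallP => k; case/andP: (H k).
by rewrite (forallP H1 k) (forallP H2 k).
Qed.

Lemma Hc_entry (u : 'I_n -> int) (hu : forall k, u k = 1 \/ u k = -1) r s :
  Hc R u r s =
  ket R (fun k => u k == 1) r 0 * ket R (fun k => u k != 1) s 0 +
  ket R (fun k => u k != 1) r 0 * ket R (fun k => u k == 1) s 0.
Proof.
rewrite /Hc mxE.
have h1 : (mxprod (fun k => sigma_on R k (u k))) r s =
   \prod_(i < n) sigma1 R (u i) (qbit r i) (qbit s i) := @lprod R n (fun k => sigma1 R (u k)) r s.
have h2 : (mxprod (fun k => sigma_on R k (- u k))) r s =
   \prod_(i < n) sigma1 R (- u i) (qbit r i) (qbit s i) := @lprod R n (fun k => sigma1 R (- u k)) r s.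
rewrite h1 h2.
rewrite (eq_bigr _ (fun k _ => sigma1E _ (hu k) _ _)).
rewrite [X in _ + X](eq_bigr _ (fun k _ => sigma1NE _ (hu k) _ _)).
rewrite !prod_if !forall_andb !ketE.
by case: [forall k, _]; case: [forall k, _]; case: [forall k, _]; case: [forall k, _];
  rewrite /= ?mulr1 ?mulr0 ?mul0r ?mul1r.
Qed.
End Kets.


Section Gates.
Variable R : realType.
Variable n : nat.
Local Notation C := R[i].

Lemma Pg_left (t : R) (M : 'M[C]_(2 ^ n)) r s :
  (Pgate n t *m M) r s = (if [forall k, qbit r k] then expi t else 1) * M r s.
Proof.
rewrite mxE (bigD1 r) //= big1 ?addr0; first by rewrite mxE eqxx.
by move=> t' h; rewrite mxE eq_sym (negbTE h) mul0r.
Qed.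

Lemma X_left (k0 : 'I_n) (M : 'M[C]_(2 ^ n)) r t0 s :
  (forall j, qbit t0 j = if j == k0 then ~~ qbit r j else qbit r j) ->
  (Xon R k0 *m M) r s = M t0 s.
Proof.
move=> Ht0; rewrite mxE (bigD1 t0) //= big1 ?addr0.
  rewrite mxE.
  have -> : [forall j, if j == k0 then qbit r j != qbit t0 j else qbit r j == qbit t0 j].
    apply/forallP => j; rewrite Ht0; by case: (j == k0); case: (qbit r j).
  by rewrite mul1r.
move=> t h; rewrite mxE; case: ifP => H; last by rewrite mul0r.
exfalso; move/negP: h; apply; apply/eqP; apply: qbit_inj => j.
rewrite Ht0; have := forallP H j; case: (j == k0) => /=.
  by case: (qbit r j); case: (qbit t j).
by move/eqP.
Qed.

Lemma D_entry (k0 : 'I_n) (hk0 : nat_of_ord k0 = 0%N) (beta : R) r s :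
  (Pgate n beta *m (Xon R k0 *m (Pgate n (- beta) *m Xon R k0))) r s =
  (r == s)%:R
  + (expi (- beta) - 1) * (ket R (fun k : 'I_n => nat_of_ord k != 0%N) r 0 *
                           ket R (fun k : 'I_n => nat_of_ord k != 0%N) s 0)
  + (expi beta - 1) * (ket R (fun k : 'I_n => true) r 0 *
                       ket R (fun k : 'I_n => true) s 0).
Proof.
have [t0 Ht0] := qbit_surj (fun j => if j == k0 then ~~ qbit r j else qbit r j).
rewrite Pg_left (X_left _ _ _ _ _ Ht0) Pg_left.
rewrite [Xon R k0 t0 s]mxE.
rewrite !ket_pair.
case: (boolP (r == s)) => [/eqP <- | hrs].
  have -> : [forall j, if j == k0 then qbit t0 j != qbit r j else qbit t0 j == qbit r j].
    apply/forallP => j; rewrite Ht0; by case: (j == k0); case: (qbit r j).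
  rewrite !ketE.
  have -> : [forall k, qbit r k == true] = [forall k, qbit r k].
    by apply: eq_forallb => k; case: (qbit r k).
  have -> : [forall k, qbit r k == (nat_of_ord k != 0%N)] = [forall k, qbit t0 k].
    apply: eq_forallb => k; rewrite Ht0 -(inj_eq val_inj) /= hk0.
    by case: (nat_of_ord k == 0%N); case: (qbit r k).
  case: (boolP [forall k, qbit r k]) => h1; case: (boolP [forall k, qbit t0 k]) => h0.
  - exfalso; have := forallP h0 k0; rewrite Ht0 eqxx (forallP h1 k0) //.
  - rewrite /=; ring.
  - rewrite /=; ring.
  - rewrite /=; ring.
have -> : [forall j, if j == k0 then qbit t0 j != qbit s j else qbit t0 j == qbit s j] = false.
  apply/negP => H; move/negP: hrs; apply; apply/eqP; apply: qbit_inj => j.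
  have := forallP H j; rewrite Ht0; case: (j == k0) => /=.
    by case: (qbit r j); case: (qbit s j).
  by move/eqP.
rewrite /=; ring.
Qed.
End Gates.


Section Ana.
Import numFieldNormedType.Exports.
Local Open Scope classical_set_scope.
Variable R : realType.
Local Notation C := R[i].

Definition ccvg (z : nat -> C) (l : C) :=
  (fun N => complex.Re (z N)) @ \oo --> complex.Re l /\ (fun N => complex.Im (z N)) @ \oo --> complex.Im l.

Lemma ReD (x y : C) : complex.Re (x + y) = complex.Re x + complex.Re y. Proof. by case: x; case: y. Qed.
Lemma ImD (x y : C) : complex.Im (x + y) = complex.Im x + complex.Im y. Proof. by case: x; case: y. Qed.
Lemma ReM (x y : C) : complex.Re (x * y) = complex.Re x * complex.Re y - complex.Im x * complex.Im y.
Proof. by case: x => a b; case: y => c d. Qed.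
Lemma ImM (x y : C) : complex.Im (x * y) = complex.Re x * complex.Im y + complex.Im x * complex.Re y.
Proof. by case: x => a b; case: y => c d /=; rewrite addrC. Qed.

Lemma ccvgD z z' l l' : ccvg z l -> ccvg z' l' ->
  ccvg (fun N => z N + z' N) (l + l').
Proof.
move=> [h1 h2] [h3 h4]; split.
  rewrite ReD; under eq_fun do rewrite ReD; exact: cvgD.
rewrite ImD; under eq_fun do rewrite ImD; exact: cvgD.
Qed.

Lemma ccvgMr z l c : ccvg z l -> ccvg (fun N => z N * c) (l * c).
Proof.
move=> [h1 h2]; split.
  rewrite ReM; under eq_fun do rewrite ReM.
  by apply: cvgB; apply: cvgMr_tmp.
rewrite ImM; under eq_fun do rewrite ImM.
by apply: cvgD; apply: cvgMr_tmp.
Qed.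

Lemma ccvg_pos : ccvg (fun N => (0 < N)%N%:R) 1.
Proof.
split.
  rewrite -cvg_shiftS /=; exact: cvg_cst.
rewrite -cvg_shiftS /=; exact: cvg_cst.
Qed.

Definition sN (z : C) (N : nat) : C := \sum_(k < N) (k`!%:R)^-1 * z ^+ k.

Lemma invnatC (m : nat) : (m%:R : C)^-1 = ((m%:R : R)^-1 +i* 0)%C.
Proof. by rewrite -(rmorph_nat (real_complex R)) -fmorphV. Qed.

Lemma powi_even (x : R) m : (0 +i* x)%C ^+ (m.*2) = (((-1) ^+ m * x ^+ (m.*2)) +i* 0)%C.
Proof.
rewrite -mul2n GRing.exprM.
have -> : (0 +i* x)%C ^+ 2 = ((- x ^+ 2) +i* 0)%C.
  rewrite expr2; apply/eqP; rewrite eq_complex /=; apply/andP; split; apply/eqP; ring.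
have e : (- x ^+ 2) ^+ m = (-1) ^+ m * x ^+ (2 * m) by rewrite GRing.exprM -exprMn mulN1r.
by rewrite !complexr0 -rmorphXn e.
Qed.

Lemma powi_odd (x : R) m : (0 +i* x)%C ^+ (m.*2.+1) = (0 +i* ((-1) ^+ m * x ^+ (m.*2.+1)))%C.
Proof.
rewrite exprS powi_even; apply/eqP; rewrite eq_complex /=; apply/andP; split; apply/eqP;
  rewrite ?exprS; ring.
Qed.

Lemma Re_sN x N : complex.Re (sN (0 +i* x)%C N) = series (cos_coeff x) N.
Proof.
rewrite /series /= big_mkord /sN.
rewrite (big_morph (@complex.Re R) ReD (erefl (complex.Re 0))).
apply: eq_bigr => k _.
rewrite invnatC /cos_coeff /= -(odd_double_half k).
case: (odd k); move: (k./2) => m; rewrite ?add1n ?add0n.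
  by rewrite powi_odd /= odd_double /= -?exprnP; ring.
rewrite powi_even /= odd_double doubleK /= -?exprnP; ring.
Qed.

Lemma Im_sN x N : complex.Im (sN (0 +i* x)%C N) = series (sin_coeff x) N.
Proof.
rewrite /series /= big_mkord /sN.
rewrite (big_morph (@complex.Im R) ImD (erefl (complex.Im 0))).
apply: eq_bigr => k _.
rewrite invnatC /sin_coeff /= -(odd_double_half k).
case: (odd k); move: (k./2) => m; rewrite ?add1n ?add0n.
  by rewrite powi_odd /= odd_double /= doubleK; ring.
rewrite powi_even /= odd_double /=; ring.
Qed.

Lemma ccvg_exp x : ccvg (sN (0 +i* x)%C) (expi x).
Proof.
split.
  under eq_fun do rewrite Re_sN.
  rewrite /expi /=; rewrite unlock; exact: is_cvg_series_cos_coeff.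
under eq_fun do rewrite Im_sN.
rewrite /expi /=; rewrite unlock; exact: is_cvg_series_sin_coeff.
Qed.
End Ana.


Section Alg.
Variable R : realType.
Local Notation C := R[i].

Lemma daggerE m p (A : 'M[C]_(m, p)) i j : dagger A i j = conjc (A j i).
Proof. by rewrite !mxE. Qed.

Lemma dagger_mul m p q (A : 'M[C]_(m, p)) (B : 'M[C]_(p, q)) :
  dagger (A *m B) = dagger B *m dagger A.
Proof.
apply/matrixP => i j; rewrite daggerE !mxE rmorph_sum; apply: eq_bigr => k _.
by rewrite rmorphM !daggerE mulrC.
Qed.

Lemma daggerK m p (A : 'M[C]_(m, p)) : dagger (dagger A) = A.
Proof. by apply/matrixP => i j; rewrite !daggerE conjcK. Qed.

Lemma dagger_ket n (b : 'I_n -> bool) : dagger (ket R b) = (ket R b)^T.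
Proof. by apply/matrixP => i j; rewrite daggerE ket_conj [RHS]mxE. Qed.

Lemma ket_dot_self n (b : 'I_n -> bool) : (ket R b)^T *m ket R b = 1%:M.
Proof.
rewrite ket_dot; have -> // : [forall k, b k == b k].
by apply/forallP => k; rewrite eqxx.
Qed.

Lemma ket_dot_neq n (b b' : 'I_n -> bool) k : b k != b' k -> (ket R b)^T *m ket R b' = 0.
Proof.
move=> h; rewrite ket_dot; have -> : [forall k, b k == b' k] = false.
  by apply/negP => /forallP /(_ k); rewrite (negbTE h).
by apply/matrixP => i j; rewrite !mxE mul0rn.
Qed.

Lemma proj_diff N (a b : 'cV[C]_N) (c : C) (hc : c * conjc c * 2 = 1)
  (ha : forall i, conjc (a i 0) = a i 0) (hb : forall i, conjc (b i 0) = b i 0) :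
  (c *: (a + b)) *m dagger (c *: (a + b)) - (c *: (a - b)) *m dagger (c *: (a - b))
  = a *m b^T + b *m a^T.
Proof.
apply/matrixP => i j; rewrite !mxE !big_ord1 !mxE.
have e1 : conjc (c * (a j 0 + b j 0)) = conjc c * (a j 0 + b j 0).
  by rewrite rmorphM rmorphD; congr (_ * (_ + _)); [exact: ha | exact: hb].
have e2 : conjc (c * (a j 0 - b j 0)) = conjc c * (a j 0 - b j 0).
  by rewrite rmorphM rmorphB; congr (_ * (_ - _)); [exact: ha | exact: hb].
rewrite e1 e2.
have -> : c * (a i 0 + b i 0) * (conjc c * (a j 0 + b j 0)) -
  c * (a i 0 - b i 0) * (conjc c * (a j 0 - b j 0)) =
  (c * conjc c * 2) * (a i 0 * b j 0 + b i 0 * a j 0) by ring.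
by rewrite hc mul1r.
Qed.

Lemma spectral N (P1 P2 : 'M[C]_N) (a : C) :
  P1 *m P1 = P1 -> P2 *m P2 = P2 -> P1 *m P2 = 0 -> P2 *m P1 = 0 ->
  forall k, mxpow (a *: (P1 - P2)) k =
    (k == 0)%N%:R *: (1%:M - P1 - P2) + a ^+ k *: P1 + (- a) ^+ k *: P2.
Proof.
move=> h11 h22 h12 h21; elim => [|k IH].
  by apply/matrixP => i j; rewrite /mxpow /= !mxE; ring.
have -> : mxpow (a *: (P1 - P2)) k.+1 = (a *: (P1 - P2)) *m mxpow (a *: (P1 - P2)) k by [].
rewrite IH !mulmxDr -!scalemxAr -!scalemxAl !mulmxBl !mulmxBr !mulmx1 h11 h22 h12 h21.
apply/matrixP => i j; rewrite !mxE !exprS /=; ring.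
Qed.

Lemma exp_partialE N (P1 P2 : 'M[C]_N) (a : C) :
  P1 *m P1 = P1 -> P2 *m P2 = P2 -> P1 *m P2 = 0 -> P2 *m P1 = 0 ->
  forall M i j, exp_partial (a *: (P1 - P2)) M i j =
    (0 < M)%N%:R * (1%:M - P1 - P2) i j + sN R a M * P1 i j + sN R (- a) M * P2 i j.
Proof.
move=> h11 h22 h12 h21; elim => [|M IH] i j.
  by rewrite /exp_partial /sN !big_ord0 !mxE ltnn /= mulr0n !mul0r !addr0.
rewrite /exp_partial big_ord_recr mxE -/(exp_partial _ M) IH /sN !big_ord_recr /=.
rewrite -/(sN R a M) -/(sN R (- a) M) spectral // !mxE.
case: M IH => [|M] IH /=.
  rewrite /sN !big_ord0 invr1; ring.
ring.
Qed.
End Alg.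


Theorem lemma2 (R : realType) (n : nat) (hn : (1 <= n)%N)
  (u : 'I_n -> int) (hu : forall k, u k = 1 \/ u k = -1)
  (G : 'M[R[i]]_(2 ^ n)) (hG : unitary G)
  (hGp : G *m (invsqrt2 R *: (ket R (fun k => u k == 1) + ket R (fun k => u k != 1)))
         = ket R (fun k : 'I_n => nat_of_ord k != 0%N))
  (hGm : G *m (invsqrt2 R *: (ket R (fun k => u k == 1) - ket R (fun k => u k != 1)))
         = ket R (fun k : 'I_n => true))
  (beta : R) :
  is_mxexp (miR beta *: Hc R u)
    (dagger G *m Pgate n beta *m Xon R (Ordinal hn) *m Pgate n (- beta)
       *m Xon R (Ordinal hn) *m G).
Proof.
set k0 := Ordinal hn.
set e0 := ket R (fun k : 'I_n => nat_of_ord k != 0%N) in hGp hGm *.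
set e1 := ket R (fun k : 'I_n => true) in hGp hGm *.
set kv := ket R (fun k => u k == 1) in hGp hGm *.
set kw := ket R (fun k => u k != 1) in hGp hGm *.
set c := invsqrt2 R in hGp hGm *.
set xp := c *: (kv + kw) in hGp hGm *.
set xm := c *: (kv - kw) in hGp hGm *.
set dG := dagger G.
case: hG => hGl hGr.
have h1 : dG *m e0 = xp by rewrite -hGp mulmxA hGl mul1mx.
have h2 : dG *m e1 = xm by rewrite -hGm mulmxA hGl mul1mx.
have h3 : dagger xp = e0^T *m G by rewrite -h1 dagger_mul daggerK dagger_ket.
have h4 : dagger xm = e1^T *m G by rewrite -h2 dagger_mul daggerK dagger_ket.
have o00 : e0^T *m e0 = 1%:M by exact: ket_dot_self.
have o11 : e1^T *m e1 = 1%:M by exact: ket_dot_self.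
have o01 : e0^T *m e1 = 0 by exact: (@ket_dot_neq R n _ _ k0).
have o10 : e1^T *m e0 = 0 by exact: (@ket_dot_neq R n _ _ k0).
have dd : forall (x y : 'cV[R[i]]_(2 ^ n)), (x^T *m G) *m (dG *m y) = x^T *m y.
  by move=> x y; rewrite mulmxA -(mulmxA _ G) hGr mulmx1.
set Pp := xp *m dagger xp.
set Pm := xm *m dagger xm.
have oxp : dagger xp *m xp = 1%:M by rewrite h3 -h1 dd o00.
have oxm : dagger xm *m xm = 1%:M by rewrite h4 -h2 dd o11.
have oxpm : dagger xp *m xm = 0 by rewrite h3 -h2 dd o01.
have oxmp : dagger xm *m xp = 0 by rewrite h4 -h1 dd o10.
have p11 : Pp *m Pp = Pp by rewrite /Pp mulmxA -(mulmxA xp) oxp mulmx1.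
have p22 : Pm *m Pm = Pm by rewrite /Pm mulmxA -(mulmxA xm) oxm mulmx1.
have p12 : Pp *m Pm = 0 by rewrite /Pp /Pm mulmxA -(mulmxA xp) oxpm mulmx0 mul0mx.
have p21 : Pm *m Pp = 0 by rewrite /Pp /Pm mulmxA -(mulmxA xm) oxmp mulmx0 mul0mx.
have hs : (Num.sqrt (2:R))^-1 * (Num.sqrt 2)^-1 * 2 = 1.
  by rewrite -invfM -expr2 sqr_sqrtr ?ler0n // mulVf // pnatr_eq0.
have hc : c * conjc c * 2 = 1.
  rewrite /c /invsqrt2 complexr0 conjc_real.
  by rewrite -(rmorph_nat (real_complex R) 2) -!rmorphM hs rmorph1.
have HcE : Hc R u = Pp - Pm.
  rewrite /Pp /Pm /xp /xm proj_diff //; try by move=> i; rewrite ket_conj.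
  apply/matrixP => i j; rewrite Hc_entry // -/kv -/kw !mxE !big_ord1 !mxE //.
have hD : Pgate n beta *m (Xon R k0 *m (Pgate n (- beta) *m Xon R k0)) =
    1%:M + (expi (- beta) - 1) *: (e0 *m e0^T) + (expi beta - 1) *: (e1 *m e1^T).
  apply/matrixP => r s; rewrite D_entry // -/e0 -/e1 !mxE !big_ord1 !mxE //.
have q0 : dG *m (e0 *m e0^T) *m G = Pp by rewrite /Pp h3 -h1 !mulmxA.
have q1 : dG *m (e1 *m e1^T) *m G = Pm by rewrite /Pm h4 -h2 !mulmxA.
have hE : dG *m Pgate n beta *m Xon R k0 *m Pgate n (- beta) *m Xon R k0 *m G =
    1%:M + (expi (- beta) - 1) *: Pp + (expi beta - 1) *: Pm.
  have -> : dG *m Pgate n beta *m Xon R k0 *m Pgate n (- beta) *m Xon R k0 *m G =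
    dG *m (Pgate n beta *m (Xon R k0 *m (Pgate n (- beta) *m Xon R k0))) *m G.
    by rewrite !mulmxA.
  rewrite hD !mulmxDr !mulmxDl mulmx1 hGl -!scalemxAr -!scalemxAl q0 q1 //.
rewrite HcE hE => i j.
have hma : - miR beta = (0 +i* beta)%C.
  by apply/eqP; rewrite eq_complex /= oppr0 opprK !eqxx.
have key : ccvg R (fun N => exp_partial (miR beta *: (Pp - Pm)) N i j)
  ((1%:M + (expi (- beta) - 1) *: Pp + (expi beta - 1) *: Pm) i j).
  under eq_fun => N do rewrite (@exp_partialE R _ Pp Pm (miR beta) p11 p22 p12 p21).
  have -> : (1%:M + (expi (- beta) - 1) *: Pp + (expi beta - 1) *: Pm) i j =
    1 * (1%:M - Pp - Pm) i j + expi (- beta) * Pp i j + expi beta * Pm i j.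
    by rewrite !mxE; ring.
  apply: ccvgD; [apply: ccvgD|]; apply: ccvgMr.
  - exact: ccvg_pos.
  - exact: ccvg_exp.
  - rewrite hma; exact: ccvg_exp.
exact: key.
Qed.
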